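(* Assume $f\in C(\Omega;L^1(I))$. Let $\alpha^*\in C(\Omega,\mathbb{R}^{N-1})$ be the minimizer of $\mathcal L$ over $C(\Omega,\mathbb{R}^{N-1})$ (equivalently $\alpha^*=A^{-1}F$), and for each $n$ let $\widehat\alpha(n)\in\mathcal N_n$ be a minimizer of $\mathcal L$ over $\mathcal N_n$. Then \[ \|\alpha^*-\widehat\alpha(n)\|_{L^2(\Omega)}\to 0\quad\text{as } n\to\infty. \]
   Context: Let $I=(-1,1)$, $\nu\ge0$, $\Omega=[a,b]^d$ with $a,b>0$, equipped with the uniform probability measure, and let $f(x;\omega)$, $x\in I$, $\omega\in\Omega$, be an external force. Let $L_k$ be the $k$-th Legendre polynomial and $\phi_k=L_k+a_kL_{k+1}+b_kL_{k+2}$, $k=1,\dots,N-1$ (with $a_k,b_k$ chosen so that the $\phi_k$ satisfy the boundary conditions). Define $S_{ij}=\int_I\phi_i'\phi_j'\,dx$, $M_{ij}=\int_I\phi_i\phi_j\,dx$, $F_j(\omega)=\int_I f(x;\omega)\phi_j(x)\,dx$, and $A=S+\nu M$; $A$ is assumed symmetric and non-singular. The population loss is $\mathcal L(\alpha)=\|A\alpha(\omega)-F(\omega)\|^2_{L^2(\Omega)}=\int_\Omega|A\alpha(\omega)-F(\omega)|^2\,d\omega$ for $\alpha:\Omega\to\mathbb{R}^{N-1}$. Neural network classes: let $\mathcal N_n^*$ be a nested sequence ($\mathcal N_n^*\subset\mathcal N^*_{n+1}$) of classes of feed-forward neural networks $\mathbb{R}^d\to\mathbb{R}^{N-1}$ with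 the universal approximation property: for every compact $K$ and $g\in C(K,\mathbb{R}^{N-1})$, $\lim_n\inf_{\hat g\in\mathcal N_n^*}\|\hat g-g\|_{C(K)}=0$. Let $C_\alpha>\sup_\Omega|\alpha^*|$, let $\sigma^*$ be a bounded activation function with continuous inverse, $\sigma_\pm=\sup/\inf\sigma^*$, $h$ the affine map $[\sigma_-,\sigma_+]\to[-C_\alpha,C_\alpha]$ with $h(\sigma_\pm)=\pm C_\alpha$, and $\mathcal N_n=\{h\circ\sigma^*(g):g\in\mathcal N_n^*\}$ (componentwise). Minimizers over $\mathcal N_n$ are assumed to exist. *)

(* Defs.v *)
From HB Require Import structures.
From mathcomp Require Import all_boot all_order all_algebra.
From mathcomp Require Import all_classical all_reals all_analysis.
Set Implicit Arguments. Unset Strict Implicit. Unset Printing Implicit Defensive.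
Import Order.TTheory GRing.Theory Num.Theory.
Import numFieldNormedType.Exports.
Local Open Scope classical_set_scope.
Local Open Scope ring_scope.

Section Defs.
Variable R : realType.

(* Legendre polynomials via Bonnet's recurrence:
   L_0 = 1, L_1 = X, (k+2) L_{k+2} = (2k+3) X L_{k+1} - (k+1) L_k.
   legendre_pair k = (L_k, L_{k+1}). *)
Fixpoint legendre_pair (k : nat) : {poly R} * {poly R} :=
  match k with
  | 0%N => (1, 'X)
  | k'.+1 => let: (p, q) := legendre_pair k' in
             (q, (k'.+2)%:R^-1 *: ((2 * k' + 3)%:R *: ('X * q) - (k'.+1)%:R *: p))
  end.

Definition legendre (k : nat) : {poly R} := (legendre_pair k).1.

Definition phi (ak bk : nat -> R) (k : nat) : {poly R} :=
  legendre k + ak k *: legendre k.+1 + bk k *: legendre k.+2.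

Definition Iset : set R := [set x | -1 < x < 1].

(* Matrices indexed by k = 1..N-1 (index i : 'I_(N.-1) stands for k = i+1). *)
Definition Smat (ak bk : nat -> R) (N : nat) : 'M[R]_(N.-1) :=
  \matrix_(i, j) Rintegral lebesgue_measure Iset
     (fun x => (phi ak bk i.+1)^`().[x] * (phi ak bk j.+1)^`().[x]).

Definition Mmat (ak bk : nat -> R) (N : nat) : 'M[R]_(N.-1) :=
  \matrix_(i, j) Rintegral lebesgue_measure Iset
     (fun x => (phi ak bk i.+1).[x] * (phi ak bk j.+1).[x]).

Definition Amat (nu : R) (ak bk : nat -> R) (N : nat) : 'M[R]_(N.-1) :=
  Smat ak bk N + nu *: Mmat ak bk N.

Definition Fvec (d : nat) (ak bk : nat -> R) (N : nat) (f : 'rV[R]_d -> R -> R)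
  (w : 'rV[R]_d) : 'cV[R]_(N.-1) :=
  \col_j Rintegral lebesgue_measure Iset (fun x => f w x * (phi ak bk j.+1).[x]).

Definition enorm (n : nat) (v : 'cV[R]_n) : R := Num.sqrt (\sum_i v i 0 ^+ 2).

Definition Omega (d : nat) (a b : R) : set 'rV[R]_d :=
  [set w | forall i, a <= w 0 i <= b].

Fixpoint cube_int (lo hi : R) (d : nat) : ('rV[R]_d -> R) -> R :=
  match d with
  | 0%N => fun g => g 0
  | d'.+1 => fun g : 'rV[R]_d'.+1 -> R =>
      Rintegral (@lebesgue_measure R) [set t : R | lo <= t <= hi]
      (fun t : R => cube_int lo hi
         (fun y : 'rV[R]_d' => g (row_mx (const_mx t : 'rV[R]_1) y)))
  end.

(* integral w.r.t. the uniform probability measure on [lo,hi]^d *)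
Definition Eunif (lo hi : R) (d : nat) (g : 'rV[R]_d -> R) : R :=
  cube_int lo hi g / (hi - lo) ^+ d.

Definition loss (lo hi : R) (d N : nat) (A : 'M[R]_(N.-1))
  (F : 'rV[R]_d -> 'cV[R]_(N.-1)) (alpha : 'rV[R]_d -> 'cV[R]_(N.-1)) : R :=
  Eunif lo hi (fun w => enorm (A *m alpha w - F w) ^+ 2).

Definition L2dist (lo hi : R) (d N : nat) (alpha beta : 'rV[R]_d -> 'cV[R]_(N.-1)) : R :=
  Num.sqrt (Eunif lo hi (fun w => enorm (alpha w - beta w) ^+ 2)).

Definition cont_L1 (d : nat) (Om : set 'rV[R]_d) (f : 'rV[R]_d -> R -> R) : Prop :=
  (forall w, Om w -> lebesgue_measure.-integrable Iset (fun x => (f w x)%:E)) /\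
  (forall w0, Om w0 ->
     (fun w => Rintegral lebesgue_measure Iset (fun x => `|f w x - f w0 x|))
       @ within Om (nbhs w0) --> 0).

Definition universal_approx (d N : nat)
  (Nstar : nat -> set ('rV[R]_d -> 'cV[R]_(N.-1))) : Prop :=
  forall (K : set 'rV[R]_d), compact K ->
  forall g : 'rV[R]_d -> 'cV[R]_(N.-1), {within K, continuous g} ->
  forall eps : R, 0 < eps ->
    \forall n \near \oo, exists2 gh, Nstar n gh &
       forall x, K x -> enorm (gh x - g x) < eps.

Definition sigma_plus (sigma : R -> R) : R := sup (range sigma).
Definition sigma_minus (sigma : R -> R) : R := inf (range sigma).

(* affine h : [sigma_-, sigma_+] -> [-C, C], h(sigma_+-) = +-C *)
Definition haff (C : R) (sigma : R -> R) (s : R) : R :=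
  - C + 2 * C * (s - sigma_minus sigma) / (sigma_plus sigma - sigma_minus sigma).

Definition NNclass (d N : nat) (C : R) (sigma : R -> R)
  (Nstar : nat -> set ('rV[R]_d -> 'cV[R]_(N.-1))) (n : nat)
  : set ('rV[R]_d -> 'cV[R]_(N.-1)) :=
  [set (fun w => map_mx (haff C sigma \o sigma) (g w)) | g in Nstar n].

End Defs.

Arguments Omega {R} d a b _.

(* Main.v *)
Require Import Defs.
From HB Require Import structures.
From mathcomp Require Import all_boot all_order all_algebra.
From mathcomp Require Import all_classical all_reals all_analysis.
From mathcomp Require Import ring lra.
Import Order.TTheory GRing.Theory Num.Theory.
Import numFieldNormedType.Exports.
Local Open Scope classical_set_scope.
Local Open Scope ring_scope.
Set Implicit Arguments. Unset Strict Implicit.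

Section Gen.
Variable R : realType.

Lemma withinP (V W : normedModType R) (K : set V) (g : V -> W) :
  {within K, continuous g} <->
  (forall x, K x -> forall e, 0 < e -> exists2 del, 0 < del &
     forall y, K y -> `|x - y| < del -> `|g x - g y| < e).
Proof.
rewrite subspace_continuousP; split.
- move=> H x Kx e e0.
  have /cvgrPdist_lt/(_ e e0) := H x Kx.
  rewrite /within => /nbhs_normP [del del0 Hd].
  exists del => // y Ky hy; apply: Hd => //.
- move=> H x Kx; apply/cvgrPdist_lt => e e0.
  have [del del0 Hd] := H x Kx e e0.
  rewrite /within; apply/nbhs_normP; exists del => //= y hy Ky.
  exact: Hd.
Qed.

Lemma unif_cont (V : normedModType R) (K : set V) (g : V -> R) :
  compact K -> {within K, continuous g} ->
  forall e, 0 < e -> exists2 del, 0 < del &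
    forall x y, K x -> K y -> `|x - y| < del -> `|g x - g y| < e.
Proof.
move=> cK /withinP gc e e0.
have : \forall del \near (0:R), K `<=`
   (fun x => K x -> forall y, K y -> `|x - y| < `|del| -> `|g x - g y| < e).
  apply: (proj1 (compact_near_coveringP K) cK R (nbhs (0:R))
  (fun del x => K x -> forall y, K y -> `|x - y| < `|del| -> `|g x - g y| < e)).
  move=> x Kx.
  have e20 : 0 < e / 2 by rewrite divr_gt0.
  have [dx dx0 Hx] := gc x Kx _ e20.
  have dx20 : 0 < dx / 2 by rewrite divr_gt0.
  exists ([set y | `|x - y| < dx/2], [set y : R | `|y| < dx/2]).
    split => /=.
      by apply/nbhs_normP; exists (dx/2) => //= z; rewrite /ball_.
    by apply/nbhs_normP; exists (dx/2) => //= z; rewrite /ball_ /= sub0r normrN.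
  case=> x' del /= [bx bd] Kx' y Ky hy.
  have hxy : `|x - y| < dx.
    rewrite (_ : x - y = (x - x') + (x' - y)); last by rewrite addrA subrK.
    apply: (le_lt_trans (ler_normD _ _)).
    rewrite (splitr dx); apply: ltrD.
      by apply: lt_le_trans bx _.
    by apply: lt_trans hy bd.
  have h1 := Hx y Ky hxy.
  have h2 : `|g x - g x'| < e / 2.
    apply: Hx Kx' _; apply: lt_trans bx _.
    by rewrite ltr_pdivrMr // ltr_pMr // ltr1n.
  rewrite (_ : g x' - g y = (g x - g y) - (g x - g x')); last first.
    by ring.
  apply: (le_lt_trans (ler_normB _ _)).
  by rewrite (splitr e); apply: ltrD.
move=> /nbhs_ballP [del del0 Hd].
  exists (del / 2); first by rewrite divr_gt0.
  move=> x y Kx Ky hxy.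
  have : ball (0:R) del (del / 2).
    rewrite /ball /= sub0r normrN gtr0_norm ?divr_gt0 //.
    by rewrite ltr_pdivrMr // ltr_pMr // ltr1n.
  move/Hd => /(_ x Kx Kx y Ky); apply.
  by rewrite gtr0_norm // divr_gt0.
Qed.

Lemma unif_cont_near (K : set R) (f : R -> R) :
  compact K -> continuous f ->
  forall e, 0 < e -> exists2 del, 0 < del &
    forall x y, K x -> `|x - y| < del -> `|f x - f y| < e.
Proof.
move=> cK fc e e0.
have : \forall del \near (0:R), K `<=`
   (fun x => K x -> forall y, `|x - y| < `|del| -> `|f x - f y| < e).
  apply: (proj1 (compact_near_coveringP K) cK R (nbhs (0:R))
  (fun del x => K x -> forall y, `|x - y| < `|del| -> `|f x - f y| < e)).
  move=> x Kx.
  have e20 : 0 < e / 2 by rewrite divr_gt0.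
  have /cvgrPdist_lt/(_ _ e20) := fc x.
  move=> /nbhs_ballP [dx dx0 Hx].
  have dx20 : 0 < dx / 2 by rewrite divr_gt0.
  exists ([set y | `|x - y| < dx/2], [set y : R | `|y| < dx/2]).
    split => /=.
      by apply/nbhs_normP; exists (dx/2) => //= z; rewrite /ball_.
    by apply/nbhs_normP; exists (dx/2) => //= z; rewrite /ball_ /= sub0r normrN.
  case=> x' del /= [bx bd] Kx' y hy.
  have hxy : `|x - y| < dx.
    rewrite (_ : x - y = (x - x') + (x' - y)); last by rewrite addrA subrK.
    apply: (le_lt_trans (ler_normD _ _)).
    rewrite (splitr dx); apply: ltrD.
      by apply: lt_le_trans bx _.
    by apply: lt_trans hy bd.
  have h1 : `|f x - f y| < e / 2 by apply: Hx.
  have h2 : `|f x - f x'| < e / 2.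
    apply: Hx; rewrite /ball /=; apply: lt_trans bx _.
    by rewrite ltr_pdivrMr // ltr_pMr // ltr1n.
  rewrite (_ : f x' - f y = (f x - f y) - (f x - f x')); last first.
    by ring.
  apply: (le_lt_trans (ler_normB _ _)).
  by rewrite (splitr e); apply: ltrD.
move=> /nbhs_ballP [del del0 Hd].
exists (del / 2); first by rewrite divr_gt0.
move=> x y Kx hxy.
have hd2 : 0 < del / 2 by rewrite divr_gt0.
have : ball (0:R) del (del / 2).
  rewrite /ball /= sub0r normrN gtr0_norm ?divr_gt0 //.
  by rewrite ltr_pdivrMr // ltr_pMr // ltr1n.
move/Hd => /(_ x Kx Kx y); apply.
exact: lt_le_trans hxy (ler_norm _).
Qed.

End Gen.

Section M.
Variable R : realType.

Lemma mxn_entry m n (M : 'M[R]_(m, n)) i j : `|M i j| <= `|M|.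
Proof.
have -> : `|M| = mx_norm M by [].
rewrite mx_normrE; apply/bigmax_geP; right; by exists (i, j).
Qed.

Lemma mxn_le m n (M : 'M[R]_(m, n)) c : 0 <= c ->
  (forall i j, `|M i j| <= c) -> `|M| <= c.
Proof.
move=> c0 H; have -> : `|M| = mx_norm M by [].
rewrite mx_normrE; apply/bigmax_leP; split => // ij _; exact: H.
Qed.

Lemma Omega_compact d (a b : R) : compact (Omega d a b).
Proof.
have -> : Omega d a b = [set v : 'rV[R]_d | forall i, (`[a, b]%classic : set R) (v ord0 i)].
  rewrite /Omega; apply/seteqP; split => v /= H i.
    by have := H i; rewrite in_itv.
  by have := H i; rewrite /= in_itv.
apply: (@rV_compact _ _ (fun=> `[a, b]%classic)) => i; exact: segment_compact.
Qed.

Definition rw {d} (t : R) (y : 'rV[R]_d) : 'rV[R]_d.+1 := row_mx (const_mx t : 'rV[R]_1) y.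

Lemma rowEl d (t : R) (y : 'rV[R]_d) (i : 'I_1) :
  @fun_of_matrix R 1 d.+1 (row_mx (const_mx t : 'rV[R]_1) y) i (@lshift 1 d ord0) = t.
Proof.
transitivity ((const_mx t : 'rV[R]_1) i ord0); first exact: row_mxEl.
by rewrite mxE.
Qed.

Lemma rowEr d (t : R) (y : 'rV[R]_d) (i : 'I_1) j :
  @fun_of_matrix R 1 d.+1 (row_mx (const_mx t : 'rV[R]_1) y) i (@rshift 1 d j) = y i j.
Proof. exact: row_mxEr. Qed.

Lemma rowE d (t : R) (y : 'rV[R]_d) (i : 'I_1) (j : 'I_d.+1) :
  @fun_of_matrix R 1 d.+1 (row_mx (const_mx t : 'rV[R]_1) y) i j =
  match fintype.split (j : 'I_(1 + d)) with inl _ => t | inr k => y i k end.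
Proof.
case: splitP => k hk.
  have -> : j = @lshift 1 d k by apply/val_inj.
  by rewrite (ord1 k) rowEl.
have -> : j = @rshift 1 d k by apply/val_inj.
by rewrite rowEr.
Qed.

Lemma Omega_row d (a b t : R) (y : 'rV[R]_d) :
  Omega d.+1 a b (row_mx (const_mx t : 'rV[R]_1) y) <-> (a <= t <= b /\ Omega d a b y).
Proof.
rewrite /Omega /=; split.
- move=> H; split.
    by have := H (@lshift 1 d ord0); rewrite rowEl.
  by move=> i; have := H (@rshift 1 d i); rewrite rowEr.
- case=> ht hy i; rewrite rowE; case: (fintype.split (i : 'I_(1 + d))) => j //.
Qed.

Lemma row_dist_t d (t t' : R) (y : 'rV[R]_d) :
  `|rw t y - rw t' y| <= `|t - t'|.
Proof.
apply: mxn_le => // i j; rewrite !mxE.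
by case: (fintype.split _) => k; rewrite ?mxE ?subrr ?normr0.
Qed.

Lemma row_dist_y d (t : R) (y y' : 'rV[R]_d) :
  `|rw t y - rw t y'| <= `|y - y'|.
Proof.
apply: mxn_le => // i j; rewrite !mxE.
case: (fintype.split _) => k; rewrite ?mxE ?subrr ?normr0 //.
by have := @mxn_entry 1 d (y - y') i k; rewrite !mxE.
Qed.

Lemma mx_cvg_entries (T : Type) (F : set_system T) (FF : Filter F) m n
  (f : T -> 'M[R]_(m, n)) (M : 'M[R]_(m, n)) :
  (forall i j, (fun t => f t i j) @ F --> M i j) ->
  forall e, 0 < e -> \forall t \near F, `|M - f t| < e.
Proof.
move=> H e e0.
have e20 : 0 < e / 2 by rewrite divr_gt0.
have h : forall ij : 'I_m * 'I_n,
    \forall t \near F, `|M ij.1 ij.2 - f t ij.1 ij.2| < e / 2.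
  by move=> ij; apply: cvgr_dist_lt.
have := filter_forall FF h; apply: filterS => t Ht.
apply: le_lt_trans (_ : e / 2 < e); last by rewrite ltr_pdivrMr // ltr_pMr // ltr1n.
apply: mxn_le; first exact: ltW.
move=> i j; rewrite !mxE; apply: ltW; exact: (Ht (i, j)).
Qed.

End M.

Section Cube.
Variable R : realType.
Variables (a b : R).
Hypothesis hab : a < b.

Definition Iab : set R := [set t : R | a <= t <= b].

Lemma Iab_itv : Iab = [set` `[a, b]].
Proof. by apply/seteqP; split => t /=; rewrite in_itv. Qed.

Lemma Iab_meas : measurable Iab.
Proof. rewrite Iab_itv; exact: measurable_itv. Qed.

Lemma Iab_compact : compact Iab.
Proof. rewrite Iab_itv; exact: segment_compact. Qed.

Lemma Iab_mu : fine (lebesgue_measure Iab) = b - a.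
Proof. rewrite Iab_itv lebesgue_measure_itv /= lte_fin hab /=. by []. Qed.

Definition Good d (g : 'rV[R]_d -> R) := {within Omega d a b, continuous g}.

Lemma cube_S d (g : 'rV[R]_d.+1 -> R) :
  cube_int a b g = Rintegral lebesgue_measure Iab
     (fun t => cube_int a b (fun y => g (rw t y))).
Proof. by []. Qed.

Lemma cube_ext d (g h : 'rV[R]_d -> R) :
  (forall w, Omega d a b w -> g w = h w) -> cube_int a b g = cube_int a b h.
Proof.
elim: d g h => [|d IH] g h H.
  by rewrite /=; apply: H => -[].
rewrite !cube_S; apply: eq_Rintegral => t; rewrite inE => ht.
apply: IH => y hy; apply: H; exact/Omega_row.
Qed.

Lemma cube_cst d (c : R) : cube_int a b (fun _ : 'rV[R]_d => c) = c * (b - a) ^+ d.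
Proof.
elim: d => [|d IH]; first by rewrite /= expr0 mulr1.
rewrite cube_S; transitivity (Rintegral lebesgue_measure Iab (fun=> c * (b - a) ^+ d)).
  by apply: eq_Rintegral => t _; rewrite IH.
rewrite Rintegral_cst; last exact: Iab_meas.
rewrite exprSr mulrA; congr (_ * _); exact: Iab_mu.
Qed.

Lemma GoodD d (g h : 'rV[R]_d -> R) : Good g -> Good h -> Good (fun w => g w + h w).
Proof. by move=> cg ch x; apply: continuousD; [apply: cg|apply: ch]. Qed.

Lemma GoodM d (g h : 'rV[R]_d -> R) : Good g -> Good h -> Good (fun w => g w * h w).
Proof. by move=> cg ch x; apply: continuousM; [apply: cg|apply: ch]. Qed.

Lemma Goodc d (c : R) : Good (fun _ : 'rV[R]_d => c).
Proof. by move=> x; apply: cvg_cst. Qed.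

Lemma GoodcM d c (g : 'rV[R]_d -> R) : Good g -> Good (fun w => c * g w).
Proof. by move=> cg; apply: GoodM => //; apply: Goodc. Qed.

Lemma slice_good d (g : 'rV[R]_d.+1 -> R) t : Good g -> a <= t <= b ->
  Good (fun y => g (rw t y)).
Proof.
move=> /withinP cg ht; apply/withinP => y hy e e0.
have hty : Omega d.+1 a b (rw t y) by apply/Omega_row.
have [del del0 Hd] := cg _ hty e e0.
exists del => // z hz hyz; apply: Hd; first exact/Omega_row.
exact: le_lt_trans (row_dist_y _ _ _) hyz.
Qed.

Definition Pd d :=
  [/\ (forall g h : 'rV[R]_d -> R, Good g -> Good h ->
        cube_int a b (fun w => g w + h w) = cube_int a b g + cube_int a b h),
      (forall (g : 'rV[R]_d -> R) c, Good g ->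
        cube_int a b (fun w => c * g w) = c * cube_int a b g) &
      (forall g h : 'rV[R]_d -> R, Good g -> Good h ->
        (forall w, Omega d a b w -> g w <= h w) -> cube_int a b g <= cube_int a b h)].

Lemma Pd_bound d : Pd d -> forall (g : 'rV[R]_d -> R) c, Good g ->
  (forall w, Omega d a b w -> `|g w| <= c) -> `|cube_int a b g| <= c * (b - a) ^+ d.
Proof.
case=> PD PZ PL g c cg hc; rewrite ler_norml; apply/andP; split.
  rewrite lerNl -mulN1r -PZ //; rewrite -cube_cst; apply: PL => //.
    exact: GoodcM.
  exact: Goodc.
  by move=> w /hc; rewrite ler_norml mulN1r lerNl => /andP[].
rewrite -cube_cst; apply: PL => //; first exact: Goodc.
by move=> w /hc; rewrite ler_norml => /andP[].
Qed.

Lemma par_cont d (g : 'rV[R]_d.+1 -> R) : Pd d -> Good g ->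
  {within Iab, continuous (fun t => cube_int a b (fun y => g (rw t y)))}.
Proof.
move=> P cg; apply/withinP => x hx e e0.
have cp : 0 < (b - a) ^+ d + 1 by rewrite ltr_wpDl // exprn_ge0 // subr_ge0 ltW.
have e'0 : 0 < e / ((b - a) ^+ d + 1) by rewrite divr_gt0.
have [del del0 Hd] := unif_cont (@Omega_compact R d.+1 a b) cg e'0.
exists del => // t ht hxt.
have gx := slice_good cg hx; have gt := slice_good cg ht.
have -> : cube_int a b (fun y => g (rw x y)) - cube_int a b (fun y => g (rw t y))
   = cube_int a b (fun y => g (rw x y) + (-1) * g (rw t y)).
  case: P => PD PZ _; rewrite PD //; last exact: GoodcM.
  by rewrite PZ // mulN1r.
apply: le_lt_trans.
  apply: (Pd_bound P (c := e / ((b - a) ^+ d + 1))).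
    by apply: GoodD => //; exact: GoodcM.
  move=> y hy; rewrite mulN1r; apply: ltW; apply: Hd.
  - exact/Omega_row.
  - exact/Omega_row.
  exact: le_lt_trans (row_dist_t _ _ _) hxt.
by rewrite mulrAC ltr_pdivrMr // ltr_pM2l // ltrDl.
Qed.

Lemma Gint d (g : 'rV[R]_d.+1 -> R) : Pd d -> Good g ->
  lebesgue_measure.-integrable Iab
    (EFin \o (fun t => cube_int a b (fun y => g (rw t y)))).
Proof.
move=> P cg; apply: continuous_compact_integrable.
  exact: Iab_compact.
exact: par_cont.
Qed.

Lemma Pd_all d : Pd d.
Proof.
elim: d => [|d P].
  by split => //= g h _ _; apply => -[m i]; exfalso; by rewrite ltn0 in i.
split.
- move=> g h cg ch; rewrite !cube_S.
  transitivity (Rintegral lebesgue_measure Iab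
    (fun t => cube_int a b (fun y => g (rw t y)) + cube_int a b (fun y => h (rw t y)))).
    apply: eq_Rintegral => t; rewrite inE => ht.
    by case: P => PD _ _; rewrite PD //; apply: slice_good.
  by rewrite RintegralD //; [exact: Iab_meas|exact: Gint|exact: Gint].
- move=> g c cg; rewrite !cube_S.
  transitivity (Rintegral lebesgue_measure Iab
    (fun t => c * cube_int a b (fun y => g (rw t y)))).
    apply: eq_Rintegral => t; rewrite inE => ht.
    by case: P => _ PZ _; rewrite PZ //; apply: slice_good.
  by rewrite RintegralZl //; [exact: Iab_meas|exact: Gint].
- move=> g h cg ch gh; rewrite !cube_S.
  apply: le_Rintegral; [exact: Iab_meas|exact: Gint|exact: Gint|].
  move=> t ht; case: P => _ _ PL; apply: PL; try exact: slice_good.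
  by move=> y hy; apply: gh; apply/Omega_row.
Qed.

Lemma Good_sum d n (f : 'I_n -> 'rV[R]_d -> R) :
  (forall j, Good (f j)) -> Good (fun w => \sum_(j < n) f j w).
Proof.
elim: n f => [|n IH] f hf.
  have -> : (fun w => \sum_(j < 0) f j w) = (fun=> 0).
    by apply/funext => w; rewrite big_ord0.
  exact: Goodc.
have -> : (fun w => \sum_(j < n.+1) f j w) =
          (fun w => \sum_(j < n) f (widen_ord (leqnSn n) j) w + f ord_max w).
  by apply/funext => w; rewrite big_ord_recr.
apply: GoodD; last exact: hf.
exact: (IH (fun j => f (widen_ord (leqnSn n) j))).
Qed.

Lemma Good_comp d (g : 'rV[R]_d -> R) (h : R -> R) :
  Good g -> continuous h -> Good (fun w => h (g w)).
Proof. by move=> cg ch x; apply: continuous_comp; [apply: cg|apply: ch]. Qed.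

Lemma Good_glob d (g : 'rV[R]_d -> R) : continuous g -> Good g.
Proof. exact: continuous_subspaceT. Qed.

Lemma Good_wcomp d (u : 'rV[R]_d -> R) (S : set R) (s : R -> R) :
  Good u -> (forall w, Omega d a b w -> S (u w)) -> {within S, continuous s} ->
  Good (fun w => s (u w)).
Proof.
move=> /withinP cu hS /withinP cs; apply/withinP => w hw e e0.
have [d1 d10 H1] := cs _ (hS w hw) e e0.
have [d2 d20 H2] := cu w hw d1 d10.
exists d2 => // z hz hwz; apply: H1; first exact: hS.
exact: H2.
Qed.

Definition E d (g : 'rV[R]_d -> R) := Eunif a b g.

Lemma ba_gt0 d : 0 < (b - a) ^+ d.
Proof. by rewrite exprn_gt0 // subr_gt0. Qed.

Lemma ED d (g h : 'rV[R]_d -> R) : Good g -> Good h ->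
  E (fun w => g w + h w) = E g + E h.
Proof.
move=> cg ch; rewrite /E /Eunif; case: (Pd_all d) => PD _ _.
by rewrite PD // mulrDl.
Qed.

Lemma EZ d (g : 'rV[R]_d -> R) c : Good g -> E (fun w => c * g w) = c * E g.
Proof.
move=> cg; rewrite /E /Eunif; case: (Pd_all d) => _ PZ _.
by rewrite PZ // mulrA.
Qed.

Lemma Ele d (g h : 'rV[R]_d -> R) : Good g -> Good h ->
  (forall w, Omega d a b w -> g w <= h w) -> E g <= E h.
Proof.
move=> cg ch gh; rewrite /E /Eunif; case: (Pd_all d) => _ _ PL.
rewrite ler_pM2r ?invr_gt0 ?ba_gt0 //; exact: PL.
Qed.

Lemma Ecst d c : E (fun _ : 'rV[R]_d => c) = c.
Proof.
rewrite /E /Eunif cube_cst -mulrA mulfV ?mulr1 //.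
by rewrite gt_eqF // ba_gt0.
Qed.

End Cube.

Section V.
Variable R : realType.
Variable n : nat.
Implicit Types u v : 'cV[R]_n.

Definition esq v := \sum_i v i 0 ^+ 2.

Lemma esq_ge0 v : 0 <= esq v.
Proof. by apply: sumr_ge0 => i _; rewrite sqr_ge0. Qed.

Lemma enorm_sq v : enorm v ^+ 2 = esq v.
Proof. by rewrite /enorm sqr_sqrtr // esq_ge0. Qed.

Lemma enorm_ge0 v : 0 <= enorm v.
Proof. exact: sqrtr_ge0. Qed.

Lemma enormE v : enorm v = Num.sqrt (esq v).
Proof. by []. Qed.

Lemma entry_le_enorm v i : `|v i 0| <= enorm v.
Proof.
rewrite /enorm -sqrtr_sqr ler_sqrt; last exact: esq_ge0.
rewrite -/(esq v) /esq (bigD1 i) //= lerDl.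
by apply: sumr_ge0 => j _; rewrite sqr_ge0.
Qed.

Lemma esqD u v : esq (u + v) <= 2 * esq u + 2 * esq v.
Proof.
rewrite /esq !mulr_sumr -big_split; apply: ler_sum => i _; rewrite mxE.
have H (x y : R) : (x + y) ^+ 2 <= 2 * x ^+ 2 + 2 * y ^+ 2.
  have : 0 <= (x - y) ^+ 2 by rewrite sqr_ge0.
  rewrite !expr2 => h; nra.
exact: H.
Qed.

Lemma esqN v : esq (- v) = esq v.
Proof. by apply: eq_bigr => i _; rewrite mxE sqrrN. Qed.

Lemma esq0 : esq (0 : 'cV[R]_n) = 0.
Proof. by rewrite /esq big1 // => i _; rewrite mxE expr0n. Qed.

Definition Kmx (M : 'M[R]_n) := \sum_i (\sum_j `|M i j|) ^+ 2.

Lemma Kmx_ge0 M : 0 <= Kmx M.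
Proof. by apply: sumr_ge0 => i _; rewrite sqr_ge0. Qed.

Lemma esq_mul (M : 'M[R]_n) v : esq (M *m v) <= Kmx M * esq v.
Proof.
rewrite -(enorm_sq v) /esq /Kmx mulr_suml; apply: ler_sum => i _; rewrite mxE.
have h : `|\sum_j M i j * v j 0| <= (\sum_j `|M i j|) * enorm v.
  apply: le_trans (ler_norm_sum _ _ _) _.
  rewrite mulr_suml; apply: ler_sum => j _.
  by rewrite normrM ler_wpM2l // entry_le_enorm.
rewrite -exprMn -real_normK ?num_real //.
apply: lerXn2r => //; rewrite ?nnegrE //.
by apply: mulr_ge0; [apply: sumr_ge0 => j _|exact: enorm_ge0].
Qed.

Lemma esq_bound v c : (forall i, `|v i 0| <= c) -> esq v <= n%:R * c ^+ 2.
Proof.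
move=> h; apply: le_trans (_ : \sum_(i < n) c ^+ 2 <= _).
  apply: ler_sum => i _; rewrite -real_normK ?num_real //.
  by apply: lerXn2r => //; rewrite nnegrE //; apply: le_trans (h i).
by rewrite sumr_const card_ord mulr_natl.
Qed.

End V.

Section F.
Variable R : realType.
Local Notation mu := (@lebesgue_measure R).

Lemma Iset_meas : measurable (@Iset R).
Proof.
have -> : (@Iset R) = [set` `]-1, 1[%R] by apply/seteqP; split => t /=; rewrite in_itv.
exact: measurable_itv.
Qed.

Definition pbound (p : {poly R}) := \sum_(i < size p) `|p`_i|.

Lemma pbound_ge0 p : 0 <= pbound p.
Proof. by apply: sumr_ge0. Qed.

Lemma pbound_le p x : (@Iset R) x -> `|p.[x]| <= pbound p.
Proof.
move=> /andP[h1 h2]; rewrite horner_coef.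
apply: le_trans (ler_norm_sum _ _ _) _; apply: ler_sum => i _.
rewrite normrM normrX ler_piMr //; apply: exprn_ile1 => //.
by rewrite ler_norml; apply/andP; split; apply: ltW.
Qed.

Lemma int_mulp (g : R -> R) (p : {poly R}) :
  mu.-integrable (@Iset R) (fun x => (g x)%:E) ->
  mu.-integrable (@Iset R) (EFin \o (fun x => g x * p.[x])).
Proof.
move=> gi.
have -> : EFin \o (fun x => g x * p.[x]) = ((fun x => (g x)%:E) \* (EFin \o horner p))%E.
  by apply/funext => x /=; rewrite EFinM.
apply: integrableMl; [exact: Iset_meas|exact: gi|exact: measurable_poly|].
exists (pbound p); split; first exact: num_real.
move=> M hM x Ix; apply: le_trans (pbound_le p Ix) _; exact: ltW.
Qed.

Lemma Fcont d (Om : set 'rV[R]_d) (f : 'rV[R]_d -> R -> R) (p : {poly R}) :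
  cont_L1 Om f ->
  {within Om, continuous (fun w => Rintegral mu (@Iset R) (fun x => f w x * p.[x]))}.
Proof.
case=> fi fc; apply/withinP => w0 hw0 e e0.
set B := pbound p.
have B1 : 0 < B + 1 by rewrite ltr_wpDl // pbound_ge0.
have e'0 : 0 < e / (B + 1) by rewrite divr_gt0.
have := fc w0 hw0; move=> /cvgrPdist_lt/(_ _ e'0).
rewrite /within => /nbhs_normP [del del0 Hd].
exists del => // w hw hww.
have Hw := Hd w hww hw; rewrite /= sub0r normrN in Hw.
have i0 := int_mulp p (fi w0 hw0).
have i1 := int_mulp p (fi w hw).
have iab : mu.-integrable (@Iset R) (EFin \o (fun x => `|f w x - f w0 x|)).
  apply: integrable_norm.
  have -> : EFin \o (fun x => f w x - f w0 x) =
            ((fun x => (f w x)%:E) \- (fun x => (f w0 x)%:E))%E.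
    by apply/funext => x /=; rewrite EFinB.
  by apply: integrableB; [exact: Iset_meas|exact: fi|exact: fi].
rewrite -RintegralB //; last exact: Iset_meas.
apply: le_lt_trans; first apply: le_normr_Rintegral.
- exact: Iset_meas.
- have -> : EFin \o (fun x => f w0 x * p.[x] - f w x * p.[x]) =
            ((EFin \o (fun x => f w0 x * p.[x])%R) \- (EFin \o (fun x => f w x * p.[x])%R))%E.
    by apply/funext => x /=; rewrite EFinB.
  by apply: integrableB; [exact: Iset_meas|exact: i0|exact: i1].
have hle : Rintegral mu (@Iset R) (fun x => `|f w0 x * p.[x] - f w x * p.[x]|)
   <= Rintegral mu (@Iset R) (fun x => B * `|f w x - f w0 x|).
  apply: le_Rintegral.
  - exact: Iset_meas.
  - apply: integrable_norm.
    have -> : EFin \o (fun x => f w0 x * p.[x] - f w x * p.[x]) =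
              ((EFin \o (fun x => f w0 x * p.[x])%R) \- (EFin \o (fun x => f w x * p.[x])%R))%E.
      by apply/funext => x /=; rewrite EFinB.
    by apply: integrableB; [exact: Iset_meas|exact: i0|exact: i1].
  - have -> : EFin \o (fun x => B * `|f w x - f w0 x|) =
              (fun x => B%:E * (EFin \o (fun x => `|f w x - f w0 x|)%R) x)%E.
      by apply/funext => x /=; rewrite EFinM.
    by apply: integrableZl; [exact: Iset_meas|exact: iab].
  move=> x Ix /=; rewrite -mulrBl normrM mulrC distrC.
  by rewrite ler_wpM2r // pbound_le.
apply: le_lt_trans hle _.
rewrite RintegralZl //; last exact: Iset_meas.
apply: le_lt_trans (_ : B * (e / (B + 1)) < e).
  rewrite ler_wpM2l ?pbound_ge0 //; apply: ltW.
  by apply: le_lt_trans (ler_norm _) Hw.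
by rewrite mulrA ltr_pdivrMr // mulrC ltr_pM2l // ltrDl.
Qed.

End F.

Section Sig.
Variable R : realType.
Variables (sigma : R -> R) (C : R) (Ms : R).
Hypothesis hMs : forall x, `|sigma x| <= Ms.
Hypothesis scont : continuous sigma.
Hypothesis sinj : injective sigma.
Hypothesis C0 : 0 < C.

Local Notation sp := (sigma_plus sigma).
Local Notation sm := (sigma_minus sigma).

Lemma range_ub : has_ubound (range sigma).
Proof.
exists Ms => _ [x _ <-]; by have := hMs x; rewrite ler_norml => /andP[].
Qed.

Lemma range_lb : has_lbound (range sigma).
Proof.
exists (- Ms) => _ [x _ <-]; by have := hMs x; rewrite ler_norml => /andP[].
Qed.

Lemma range_n0 : range sigma !=set0.
Proof. by exists (sigma 0), 0. Qed.

Lemma sig_le x : sm <= sigma x <= sp.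
Proof.
apply/andP; split.
  by apply: ge_inf; [exact: range_lb|exists x].
by apply: ub_le_sup; [exact: range_ub|exists x].
Qed.

Lemma sm_lt_sp : sm < sp.
Proof.
have h : sigma 0 != sigma 1 by apply/eqP => /sinj/eqP; rewrite eq_sym oner_eq0.
have /andP[h1 h2] := sig_le 0; have /andP[h3 h4] := sig_le 1.
case: (ltgtP (sigma 0) (sigma 1)) => [lt|gt|eq].
- exact: le_lt_trans h1 (lt_le_trans lt h4).
- exact: le_lt_trans h3 (lt_le_trans gt h2).
- by rewrite eq eqxx in h.
Qed.

Definition kk := (sp - sm) / (2 * C).

Lemma kk_gt0 : 0 < kk.
Proof. by rewrite /kk divr_gt0 // ?subr_gt0 ?sm_lt_sp // mulr_gt0. Qed.

Definition hinv (y : R) := sm + (y + C) * kk.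

Lemma haff_hinv y : haff C sigma (hinv y) = y.
Proof.
rewrite /haff /hinv /kk.
have h1 : sp - sm != 0 by rewrite subr_eq0 gt_eqF // sm_lt_sp.
have h2 : C != 0 by rewrite gt_eqF.
by field; apply/andP; split.
Qed.

Lemma hinv_in y : - C < y < C -> sm < hinv y < sp.
Proof.
case/andP => h1 h2; rewrite /hinv; apply/andP; split.
  by rewrite ltrDl mulr_gt0 // ?kk_gt0 // -ltrBlDr sub0r.
have e : sp = sm + (C + C) * kk.
  rewrite /kk; have h2' : C != 0 by rewrite gt_eqF.
  by field.
rewrite [X in _ < X]e ltrD2l ltr_pM2r ?kk_gt0 //.
by rewrite ltrD2r.
Qed.

Lemma sig_surj y : sm < y < sp -> exists x, sigma x = y.
Proof.
case/andP => h1 h2.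
have hs : 0 < sp - y by rewrite subr_gt0.
have [_ [x1 _ <-] hx1] := sup_adherent hs (conj range_n0 range_ub).
rewrite opprB addrCA subrr addr0 in hx1.
have hi : 0 < y - sm by rewrite subr_gt0.
have [_ [x2 _ <-] hx2] := inf_adherent hi (conj range_n0 range_lb).
rewrite addrCA subrr addr0 in hx2.
have cs : forall A, {within A, continuous sigma}.
  by move=> A; apply: continuous_subspaceT.
case: (leP x1 x2) => hx.
- have hy : Num.min (sigma x1) (sigma x2) <= y <= Num.max (sigma x1) (sigma x2).
    apply/andP; split.
      by rewrite ge_min; apply/orP; right; apply: ltW.
    by rewrite le_max; apply/orP; left; apply: ltW.
  by have [c _ hc] := IVT hx (cs _) hy; exists c.
- have hy : Num.min (sigma x2) (sigma x1) <= y <= Num.max (sigma x2) (sigma x1).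
    apply/andP; split.
      by rewrite ge_min; apply/orP; left; apply: ltW.
    by rewrite le_max; apply/orP; right; apply: ltW.
  by have [c _ hc] := IVT (ltW hx) (cs _) hy; exists c.
Qed.

End Sig.

Section G.
Variable R : realType.
Variables (a b : R) (d n : nat).

Definition Gv (v : 'rV[R]_d -> 'cV[R]_n) := forall i, Good a b (fun w => v w i 0).

Lemma Gv_D (u v : 'rV[R]_d -> 'cV[R]_n) : Gv u -> Gv v -> Gv (fun w => u w + v w).
Proof.
move=> hu hv i.
have -> : (fun w => (u w + v w) i 0) = (fun w => u w i 0 + v w i 0).
  by apply/funext => w; rewrite mxE.
exact: GoodD.
Qed.

Lemma Gv_B (u v : 'rV[R]_d -> 'cV[R]_n) : Gv u -> Gv v -> Gv (fun w => u w - v w).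
Proof.
move=> hu hv i.
have -> : (fun w => (u w - v w) i 0) = (fun w => u w i 0 + (-1) * v w i 0).
  by apply/funext => w; rewrite !mxE mulN1r.
by apply: GoodD => //; apply: GoodcM.
Qed.

Lemma Gv_mul (M : 'M[R]_n) (v : 'rV[R]_d -> 'cV[R]_n) : Gv v -> Gv (fun w => M *m v w).
Proof.
move=> hv i.
have -> : (fun w => (M *m v w) i 0) = (fun w => \sum_j (M i j * v w j 0)).
  by apply/funext => w; rewrite mxE.
by apply: Good_sum => j; apply: GoodcM.
Qed.

Lemma Good_esq (v : 'rV[R]_d -> 'cV[R]_n) : Gv v -> Good a b (fun w => esq (v w)).
Proof.
move=> hv; rewrite /esq; apply: (Good_sum (f := fun i w => v w i 0 ^+ 2)) => i.
have -> : (fun w => v w i 0 ^+ 2) = (fun w => v w i 0 * v w i 0).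
  by apply/funext => w; rewrite expr2.
exact: GoodM.
Qed.

Lemma Gv_cont (v : 'rV[R]_d -> 'cV[R]_n) : Gv v -> {within Omega d a b, continuous v}.
Proof.
move=> hv; apply/subspace_continuousP => x hx.
have FF : Filter (within (Omega d a b) (nbhs x)) by exact: within_filter.
apply/cvgrPdist_lt; apply: (mx_cvg_entries FF) => i j; rewrite ord1.
have := hv i; move/subspace_continuousP; exact.
Qed.

Lemma cont_Gv (v : 'rV[R]_d -> 'cV[R]_n) : {within Omega d a b, continuous v} -> Gv v.
Proof.
move=> hv i x.
exact: (@continuous_comp _ _ _ (v : subspace (Omega d a b) -> 'cV[R]_n)
  (fun M : 'cV[R]_n => M i 0) x (hv x) (@coord_continuous R n 1 i 0 (v x))).
Qed.

End G.

Lemma hcont (R : realType) (C : R) sigma : continuous (haff C sigma).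
Proof.
set sm := sigma_minus sigma; set sp := sigma_plus sigma.
have -> : haff C sigma = fun s => (- C - 2 * C * sm / (sp - sm)) + (2 * C / (sp - sm)) * s.
  by apply/funext => s; rewrite /haff -/sm -/sp; ring.
by move=> s; apply: cvgD; [exact: cvg_cst| apply: cvgM; [exact: cvg_cst| exact: cvg_id]].
Qed.

Lemma approx (R : realType) (d N : nat) (a b : R)
  (Nstar : nat -> set ('rV[R]_d -> 'cV[R]_(N.-1)))
  (sigma : R -> R) (Calpha : R) (alpha_star : 'rV[R]_d -> 'cV[R]_(N.-1))
  (Ms : R) (sinv : R -> R) :
  a < b ->
  universal_approx Nstar ->
  (forall x, `|sigma x| <= Ms) -> continuous sigma ->
  (forall x, sinv (sigma x) = x) -> {within range sigma, continuous sinv} ->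
  {within Omega d a b, continuous alpha_star} ->
  sup [set enorm (alpha_star w) | w in Omega d a b] < Calpha ->
  forall c, 0 < c -> \forall n \near \oo, exists2 beta,
    NNclass Calpha sigma Nstar n beta &
    forall w, Omega d a b w -> forall i, `|beta w i 0 - alpha_star w i 0| <= c.
Proof.
move=> ab UA hMs scont hsinv csinv ascont supC c c0.
have sinj : injective sigma := can_inj hsinv.
have Gas : Gv a b alpha_star := cont_Gv ascont.
set S := [set enorm (alpha_star w) | w in Omega d a b].
have Om0 : Omega d a b (const_mx a) by move=> i; rewrite mxE lexx ltW.
have cn : {within Omega d a b, continuous (fun w => enorm (alpha_star w))}.
  exact: (Good_comp (g := fun w => esq (alpha_star w)) (Good_esq Gas) (@sqrt_continuous R)).
have [w0 hw0 Hmax] := compact_EVT_max (ex_intro _ _ Om0) (@Omega_compact R d a b) cn.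
have ubS : has_ubound S.
  by exists (enorm (alpha_star w0)) => _ [w hw <-]; apply: Hmax; rewrite inE.
set S0 := sup S.
have hS : forall w, Omega d a b w -> enorm (alpha_star w) <= S0.
  by move=> w hw; apply: ub_le_sup => //; exists w.
have S0ge0 : 0 <= S0 := le_trans (enorm_ge0 _) (hS _ Om0).
have C0 : 0 < Calpha := le_lt_trans S0ge0 supC.
have ha : forall w i, Omega d a b w -> - S0 <= alpha_star w i 0 <= S0.
  move=> w i hw; rewrite -ler_norml.
  exact: le_trans (entry_le_enorm _ _) (hS _ hw).
set hv := hinv sigma Calpha.
have kk0 : 0 < kk sigma Calpha := kk_gt0 hMs sinj C0.
have hmono : forall y1 y2, y1 <= y2 -> hv y1 <= hv y2.
  by move=> y1 y2 h; rewrite /hv /hinv lerD2l ler_pM2r // lerD2r.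
have inR : forall y, - S0 <= y <= S0 -> range sigma (hv y).
  move=> y /andP[h1 h2].
  have hy : - Calpha < y < Calpha.
    apply/andP; split; last exact: le_lt_trans h2 supC.
    by apply: lt_le_trans h1; rewrite ltrN2.
  have [x hx] := sig_surj hMs scont (hinv_in hMs sinj C0 hy).
  by exists x.
have hss : forall y, - S0 <= y <= S0 -> sigma (sinv (hv y)) = hv y.
  by move=> y /inR [x _ <-]; rewrite hsinv.
set gs : 'rV[R]_d -> 'cV[R]_(N.-1) := fun w => \col_i sinv (hv (alpha_star w i 0)).
have Ggs : Gv a b gs.
  move=> i.
  have -> : (fun w => gs w i 0) = (fun w => sinv (hv (alpha_star w i 0))).
    by apply/funext => w; rewrite /gs mxE.
  apply: (Good_wcomp (S := range sigma)) => //.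
    have -> : (fun w => hv (alpha_star w i 0)) = (fun w =>
        (sigma_minus sigma + Calpha * kk sigma Calpha) +
         kk sigma Calpha * alpha_star w i 0).
      by apply/funext => w; rewrite /hv /hinv; ring.
    by apply: GoodD; [exact: Goodc|apply: GoodcM; exact: Gas].
  by move=> w hw; apply: inR; apply: ha.
have gsc := Gv_cont Ggs.
set J := [set y | hv (- S0) <= y <= hv S0].
have Sin : forall y, - S0 <= y <= S0 -> - Calpha < y < Calpha.
  move=> y /andP[h1 h2]; apply/andP; split; last exact: le_lt_trans h2 supC.
  by apply: lt_le_trans h1; rewrite ltrN2.
have mS0 : - S0 <= - S0 <= S0 by apply/andP; split => //; lra.
have pS0 : - S0 <= S0 <= S0 by apply/andP; split => //; lra.
have JR : J `<=` range sigma.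
  move=> y /andP[h1 h2].
  have /andP[l1 _] := hinv_in hMs sinj C0 (Sin _ mS0).
  have /andP[_ l2] := hinv_in hMs sinj C0 (Sin _ pS0).
  have hy : sigma_minus sigma < y < sigma_plus sigma.
    by apply/andP; split; [exact: lt_le_trans l1 h1|exact: le_lt_trans h2 l2].
  have [x hx] := sig_surj hMs scont hy.
  by exists x.
set Kc := [set sinv y | y in J].
have Kcc : compact Kc.
  apply: continuous_compact; first exact: continuous_subspaceW JR csinv.
  have -> : J = [set` `[hv (- S0), hv S0]] by apply/seteqP; split => t /=; rewrite in_itv.
  exact: segment_compact.
have gsK : forall w i, Omega d a b w -> Kc (gs w i 0).
  move=> w i hw; rewrite /gs mxE; exists (hv (alpha_star w i 0)) => //.
  by have /andP[h1 h2] := ha w i hw; apply/andP; split; apply: hmono.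
set phi := fun s => haff Calpha sigma (sigma s).
have phic : continuous phi.
  by move=> s; exact: (continuous_comp (scont s) (@hcont R Calpha sigma (sigma s))).
have phigs : forall w i, Omega d a b w -> phi (gs w i 0) = alpha_star w i 0.
  move=> w i hw; rewrite /phi /gs mxE hss; last exact: ha.
  exact: haff_hinv hMs sinj C0 _.
have [del del0 Hdel] := unif_cont_near Kcc phic c0.
have := UA _ (@Omega_compact R d a b) gs gsc del del0.
apply: filterS => n [gh hgh Hgh].
exists (fun w => map_mx (haff Calpha sigma \o sigma) (gh w)); first by exists gh.
move=> w hw i; rewrite mxE -(phigs w i hw) distrC; apply: ltW.
apply: Hdel; first exact: gsK.
apply: le_lt_trans (Hgh w hw); rewrite distrC.
by have := entry_le_enorm (gh w - gs w) i; rewrite !mxE.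
Qed.

Lemma Gv_NN (R : realType) (d N : nat) (a b : R) (C : R) (sigma : R -> R)
  (g : 'rV[R]_d -> 'cV[R]_(N.-1)) :
  continuous sigma -> continuous g ->
  Gv a b (fun w => map_mx (haff C sigma \o sigma) (g w)).
Proof.
move=> sc gc i.
have -> : (fun w => map_mx (haff C sigma \o sigma) (g w) i 0) =
          (fun w => haff C sigma (sigma (g w i 0))).
  by apply/funext => w; rewrite mxE.
have hc : continuous (fun w => haff C sigma (sigma (g w i 0))).
  have c1 : continuous (fun w => g w i 0).
    by move=> w; exact: (continuous_comp (gc w) (@coord_continuous R _ _ i 0 (g w))).
  have c2 : continuous (fun w => sigma (g w i 0)).
    by move=> w; exact: (continuous_comp (c1 w) (sc _)).
  by move=> w; exact: (continuous_comp (c2 w) (@hcont R C sigma _)).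
exact: Good_glob hc.
Qed.

Theorem theorem3p2 (R : realType) (d N : nat) (nu a b : R) (ak bk : nat -> R)
  (f : 'rV[R]_d -> R -> R)
  (Nstar : nat -> set ('rV[R]_d -> 'cV[R]_(N.-1)))
  (sigma : R -> R) (Calpha : R)
  (alpha_star : 'rV[R]_d -> 'cV[R]_(N.-1))
  (alpha_hat : nat -> 'rV[R]_d -> 'cV[R]_(N.-1)) :
  0 <= nu -> 0 < a -> a < b ->
  (Amat nu ak bk N)^T = Amat nu ak bk N ->
  Amat nu ak bk N \in unitmx ->
  cont_L1 (Omega d a b) f ->
  (forall n, Nstar n `<=` Nstar n.+1) ->
  (forall n g, Nstar n g -> continuous g) ->
  universal_approx Nstar ->
  (exists M : R, forall x, `|sigma x| <= M) ->
  continuous sigma ->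
  (exists2 sinv : R -> R, (forall x, sinv (sigma x) = x) &
                          {within range sigma, continuous sinv}) ->
  {within Omega d a b, continuous alpha_star} ->
  (forall beta : 'rV[R]_d -> 'cV[R]_(N.-1), {within Omega d a b, continuous beta} ->
     loss a b (Amat nu ak bk N) (Fvec ak bk N f) alpha_star
     <= loss a b (Amat nu ak bk N) (Fvec ak bk N f) beta) ->
  sup [set enorm (alpha_star w) | w in Omega d a b] < Calpha ->
  (forall n, NNclass Calpha sigma Nstar n (alpha_hat n)) ->
  (forall n beta, NNclass Calpha sigma Nstar n beta ->
     loss a b (Amat nu ak bk N) (Fvec ak bk N f) (alpha_hat n)
     <= loss a b (Amat nu ak bk N) (Fvec ak bk N f) beta) ->
  (fun n => L2dist a b alpha_star (alpha_hat n)) @ \oo --> 0.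
Proof.
move=> nu0 a0 ab Asym Aunit fL1 Nnest Ncont UA [Ms hMs] scont [sinv hsinv csinv]
  ascont amin supC hhat hmin.
set A := Amat nu ak bk N.
set F := Fvec ak bk N f.
have GF : Gv a b F.
  move=> i.
  have -> : (fun w => F w i 0) = (fun w => Rintegral lebesgue_measure (@Iset R)
      (fun x => f w x * (phi ak bk i.+1).[x])).
    by apply/funext => w; rewrite /F /Fvec mxE.
  exact: Fcont fL1.
have Gas : Gv a b alpha_star := cont_Gv ascont.
have lossE : forall beta, loss a b A F beta = E a b (fun w => esq (A *m beta w - F w)).
  move=> beta; rewrite /loss /E; congr Eunif; apply/funext => w; exact: enorm_sq.
set a0f := fun w => invmx A *m F w.
have G0 : Gv a b a0f := Gv_mul (M := invmx A) GF.
have loss0 : loss a b A F alpha_star <= 0.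
  apply: le_trans (amin a0f (Gv_cont G0)) _.
  rewrite lossE.
  have -> : (fun w => esq (A *m a0f w - F w)) = (fun _ => 0).
    by apply/funext => w; rewrite /a0f mulmxA mulmxV // mul1mx subrr esq0.
  by rewrite Ecst.
set u := fun w => A *m alpha_star w - F w.
have Gu : Gv a b u := Gv_B (Gv_mul (M := A) Gas) GF.
have lossu : E a b (fun w => esq (u w)) = loss a b A F alpha_star by rewrite lossE.
have KA0 : 0 <= Kmx A := Kmx_ge0 A.
have K10 : 0 <= Kmx (invmx A) := Kmx_ge0 (invmx A).
have Lbound : forall beta, Gv a b beta ->
    loss a b A F beta <= 2 * Kmx A * E a b (fun w => esq (beta w - alpha_star w)).
  move=> beta Gb; rewrite lossE.
  have Gbd : Gv a b (fun w => beta w - alpha_star w) := Gv_B Gb Gas.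
  apply: (@le_trans _ _ (E a b (fun w => 2 * Kmx A * esq (beta w - alpha_star w)
                                         + 2 * esq (u w)))).
    apply: Ele => //.
    - exact: Good_esq (Gv_B (Gv_mul (M := A) Gb) GF).
    - by apply: GoodD; apply: GoodcM; exact: Good_esq.
    move=> w _.
    have -> : A *m beta w - F w = A *m (beta w - alpha_star w) + u w.
      by rewrite /u mulmxBr addrA subrK.
    apply: le_trans (esqD _ _) _; rewrite lerD2r -mulrA ler_pM2l //.
    exact: esq_mul.
  rewrite ED //; try by apply: GoodcM; exact: Good_esq.
  rewrite !EZ //; try exact: Good_esq.
  rewrite lossu gerDl.
  by rewrite pmulr_rle0.
have Ghat : forall n, Gv a b (alpha_hat n).
  by move=> n; case: (hhat n) => g hg <-; exact: Gv_NN scont (Ncont n g hg).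
have Ebound : forall n, E a b (fun w => esq (alpha_star w - alpha_hat n w))
    <= 2 * Kmx (invmx A) * loss a b A F (alpha_hat n).
  move=> n; set v := fun w => A *m alpha_hat n w - F w.
  have Gv' : Gv a b v := Gv_B (Gv_mul (M := A) (Ghat n)) GF.
  apply: (@le_trans _ _ (E a b (fun w => 2 * Kmx (invmx A) * esq (u w)
                                         + 2 * Kmx (invmx A) * esq (v w)))).
    apply: Ele => //.
    - exact: Good_esq (Gv_B Gas (Ghat n)).
    - by apply: GoodD; apply: GoodcM; exact: Good_esq.
    move=> w _.
    have -> : alpha_star w - alpha_hat n w = invmx A *m (u w - v w).
      rewrite /u /v opprB addrA subrK -mulmxBr mulmxA mulVmx //.
      by rewrite mul1mx.
    apply: le_trans (esq_mul _ _) _.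
    apply: le_trans (_ : Kmx (invmx A) * (2 * esq (u w) + 2 * esq (- v w)) <= _).
      by rewrite ler_wpM2l // esqD.
    by rewrite esqN mulrDr !mulrA !(mulrC (Kmx _) 2).
  rewrite ED //; try by apply: GoodcM; exact: Good_esq.
  rewrite !EZ //; try exact: Good_esq.
  have -> : loss a b A F (alpha_hat n) = E a b (fun w => esq (v w)) by rewrite lossE.
  rewrite lossu gerDr.
  by apply: mulr_ge0_le0 => //; apply: mulr_ge0.
apply/cvgrPdist_lt => e e0.
set K1 := Kmx (invmx A); set KA := Kmx A; set nn : R := (N.-1)%:R.
set X := 4 * K1 * KA * nn.
have nn0 : 0 <= nn by rewrite /nn ler0n.
have X0 : 0 <= X by rewrite /X !mulr_ge0.
have X1 : 0 < X + 1 by rewrite ltr_wpDl.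
set c := e / (X + 1).
have c0 : 0 < c by rewrite divr_gt0.
have hcX : c * (X + 1) = e by rewrite /c divfK // gt_eqF.
have hXc : X * c ^+ 2 < e ^+ 2.
  rewrite -hcX; nra.
have := approx ab UA hMs scont hsinv csinv ascont supC c0.
apply: filterS => n [beta hb hbd].
have Gb : Gv a b beta by case: hb => g hg <-; exact: Gv_NN scont (Ncont n g hg).
have EB : E a b (fun w => esq (beta w - alpha_star w)) <= nn * c ^+ 2.
  rewrite -[X in _ <= X](Ecst ab d (nn * c ^+ 2)).
  apply: Ele => //; first exact: Good_esq (Gv_B Gb Gas).
    exact: Goodc.
  move=> w hw; apply: esq_bound => i; rewrite !mxE; exact: hbd.
have Y : E a b (fun w => esq (alpha_star w - alpha_hat n w)) <= X * c ^+ 2.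
  apply: le_trans (Ebound n) _.
  apply: le_trans (_ : 2 * K1 * loss a b A F beta <= _).
    by rewrite ler_wpM2l ?mulr_ge0 //; exact: hmin.
  apply: le_trans (_ : 2 * K1 * (2 * KA * (nn * c ^+ 2)) <= _).
    rewrite ler_wpM2l ?mulr_ge0 //; apply: le_trans (Lbound _ Gb) _.
    by rewrite ler_wpM2l ?mulr_ge0.
  by rewrite le_eqVlt; apply/orP; left; apply/eqP; rewrite /X; ring.
rewrite /L2dist sub0r normrN ger0_norm ?sqrtr_ge0 //.
have -> : Eunif a b (fun w => enorm (alpha_star w - alpha_hat n w) ^+ 2) =
          E a b (fun w => esq (alpha_star w - alpha_hat n w)).
  by rewrite /E; congr Eunif; apply/funext => w; exact: enorm_sq.
rewrite -[e in _ < e](ger0_norm (ltW e0)) -sqrtr_sqr ltr_sqrt ?exprn_gt0 //.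
exact: le_lt_trans Y hXc.
Qed.
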